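(* Let $n_i\le r_i$ ($i=1,2$) be nonnegative integers and let $(X_{1,1},\dots,X_{1,n_1},X_{2,1},\dots,X_{2,n_2})$ be $\{0,1\}$-valued and $(n_1,n_2)$-DFPE, with associated point $w=(w_{l_1,l_2})_{(l_1,l_2)\ne(0,0),\,0\le l_i\le n_i}$. Then the sequence is $(r_1,r_2)$-extendible if and only if $w\in\operatorname{conv}\{\lambda^{(n_1,n_2)}_{k_1,k_2;\,r_1,r_2}:0\le k_1\le r_1,\ 0\le k_2\le r_2\}$.
   Context: A family $(X_{1,1},\dots,X_{1,n_1},X_{2,1},\dots,X_{2,n_2})$ of random variables is $(n_1,n_2)$-DFPE (partially exchangeable in the sense of de Finetti) if its joint law is invariant under any permutation of the indices $1,\dots,n_1$ of the first group together with any permutation of the indices $1,\dots,n_2$ of the second group. For such a $\{0,1\}$-valued family set $w_{l_1,l_2}=P(X_{1,1}=\dots=X_{1,l_1}=1,\ X_{2,1}=\dots=X_{2,l_2}=1)$ for $0\le l_i\le n_i$. The family is $(r_1,r_2)$-extendible ($r_i\ge n_i$) if there is an $(r_1,r_2)$-DFPE $\{0,1\}$-valued family $(Y_{1,1},\dots,Y_{1,r_1},Y_{2,1},\dots,Y_{2,r_2})$ such that $(Y_{1,1},\dots,Y_{1,n_1},Y_{2,1},\dots,Y_{2,n_2})$ has the same law as the original family. For integers $m$ and $k\ge0$, $(m)_k=m(m-1)\cdots(m-k+1)$, $(m)_0=1$. For $0\le k_i\le r_i$, $\lambda^{(n_1,n_2)}_{k_1,k_2;\,r_1,r_2}$ is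 the point with the same coordinate indexing as $w$ whose $(l_1,l_2)$-coordinate is $\dfrac{(k_1)_{l_1}(k_2)_{l_2}}{(r_1)_{l_1}(r_2)_{l_2}}$. *)

(* Defs.v *)
From HB Require Import structures.
From mathcomp Require Import all_boot all_order all_algebra all_fingroup.
Set Implicit Arguments. Unset Strict Implicit. Unset Printing Implicit Defensive.
Import Order.TTheory GRing.Theory Num.Theory.
Local Open Scope ring_scope.

(* Outcomes of a {0,1}-valued family (X_{1,1..n1}, X_{2,1..n2}):
   a pair of boolean vectors (true = 1). *)
Definition outcome (n1 n2 : nat) : finType :=
  ({ffun 'I_n1 -> bool} * {ffun 'I_n2 -> bool})%type.

Definition is_law (R : realFieldType) (n1 n2 : nat) (p : outcome n1 n2 -> R) :=
  (forall x, 0 <= p x) /\ \sum_(x : outcome n1 n2) p x = 1.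

Definition permute_outcome (n1 n2 : nat) (s1 : 'S_n1) (s2 : 'S_n2)
  (x : outcome n1 n2) : outcome n1 n2 :=
  ([ffun i => x.1 (s1 i)], [ffun j => x.2 (s2 j)]).

Definition DFPE (R : realFieldType) (n1 n2 : nat) (p : outcome n1 n2 -> R) :=
  forall (s1 : 'S_n1) (s2 : 'S_n2) (x : outcome n1 n2),
    p (permute_outcome s1 s2 x) = p x.

(* w_{l1,l2} = P(X_{1,1}=..=X_{1,l1}=1, X_{2,1}=..=X_{2,l2}=1) *)
Definition wcoord (R : realFieldType) (n1 n2 : nat) (p : outcome n1 n2 -> R)
  (l1 l2 : nat) : R :=
  \sum_(x : outcome n1 n2 |
        [forall i : 'I_n1, (i < l1)%N ==> x.1 i] &&
        [forall j : 'I_n2, (j < l2)%N ==> x.2 j]) p x.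

Definition restricts (n1 n2 r1 r2 : nat) (y : outcome r1 r2) (x : outcome n1 n2)
  : bool :=
  [forall i : 'I_n1, forall j : 'I_r1, (i == j :> nat) ==> (y.1 j == x.1 i)] &&
  [forall i : 'I_n2, forall j : 'I_r2, (i == j :> nat) ==> (y.2 j == x.2 i)].

Definition extendible (R : realFieldType) (n1 n2 r1 r2 : nat)
  (p : outcome n1 n2 -> R) :=
  exists q : outcome r1 r2 -> R,
    [/\ is_law q, DFPE q &
        forall x : outcome n1 n2, p x = \sum_(y : outcome r1 r2 | restricts y x) q y].

Definition lambda_coord (R : realFieldType) (r1 r2 k1 k2 l1 l2 : nat) : R :=
  ((k1 ^_ l1)%:R * (k2 ^_ l2)%:R) / ((r1 ^_ l1)%:R * (r2 ^_ l2)%:R).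

Definition in_conv_lambda (R : realFieldType) (n1 n2 r1 r2 : nat)
  (w : nat -> nat -> R) :=
  exists c : 'I_r1.+1 -> 'I_r2.+1 -> R,
    [/\ forall k1 k2, 0 <= c k1 k2,
        \sum_(k1 < r1.+1) \sum_(k2 < r2.+1) c k1 k2 = 1 &
        forall l1 l2 : nat, (l1 <= n1)%N -> (l2 <= n2)%N -> (l1, l2) <> (0%N, 0%N) ->
          w l1 l2 = \sum_(k1 < r1.+1) \sum_(k2 < r2.+1)
                      c k1 k2 * lambda_coord R r1 r2 k1 k2 l1 l2].

(* Main.v *)
Require Import Defs.
From HB Require Import structures.
From mathcomp Require Import all_boot all_order all_algebra all_fingroup.
Set Implicit Arguments. Unset Strict Implicit. Unset Printing Implicit Defensive.
Import Order.TTheory GRing.Theory Num.Theory.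

Definition cnt m (y : {ffun 'I_m -> bool}) := #|[set i | y i]|.
Definition pre m (l : nat) (y : {ffun 'I_m -> bool}) := [forall i : 'I_m, (i < l) ==> y i].
Definition pf m (s : 'S_m) (y : {ffun 'I_m -> bool}) : {ffun 'I_m -> bool} := [ffun i => y (s i)].

Lemma cnt_count m (y : {ffun 'I_m -> bool}) : cnt y = count y (enum 'I_m).
Proof. by rewrite /cnt -sum1_count -sum1_card big_enum_cond /=; apply: eq_bigl => i; rewrite inE. Qed.

Lemma cnt_pf m s (y : {ffun 'I_m -> bool}) : cnt (pf s y) = cnt y.
Proof.
rewrite /cnt -[RHS](card_preimset _ (@perm_inj _ s)); apply: eq_card => i.
by rewrite !inE ffunE.
Qed.

Lemma cm m (f : 'I_m -> bool) (a : pred bool) :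
  count a [seq f i | i <- enum 'I_m] = count (fun i => a (f i)) (enum 'I_m).
Proof. exact: count_map. Qed.

Lemma cnt_perm m (y y' : {ffun 'I_m -> bool}) : cnt y = cnt y' ->
  exists s : 'S_m, y' = pf s y.
Proof.
move=> hc.
have e : forall f : {ffun 'I_m -> bool}, val [tuple f i | i < m] = [seq f i | i <- enum 'I_m].
  by move=> f; rewrite -val_ord_tuple.
have : perm_eq [seq y' i | i <- enum 'I_m] [tuple y i | i < m].
  rewrite e; apply/seq.permP => a; rewrite !cm.
  have cC : forall f : {ffun 'I_m -> bool}, count (predC f) (enum 'I_m) = m - cnt f.
    move=> f; have h := count_predC f (enum 'I_m); rewrite cnt_count; apply: (@addnI (count f (enum 'I_m))); rewrite h size_enum_ord subnKC //; rewrite -[X in _ <= X](size_enum_ord m); exact: count_size.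
  case ha1: (a true); case ha0: (a false).
  - rewrite !(@eq_count _ _ predT) // => i; by case: (y i); case: (y' i).
  - transitivity (count y' (enum 'I_m)); first by apply: eq_count => i /=; case: (y' i).
    transitivity (count y (enum 'I_m)); last by apply: eq_count => i /=; case: (y i).
    by rewrite -!cnt_count hc.
  - transitivity (count (predC y') (enum 'I_m)); first by apply: eq_count => i /=; case: (y' i).
    transitivity (count (predC y) (enum 'I_m)); last by apply: eq_count => i /=; case: (y i).
    by rewrite !cC hc.
  - rewrite !(@eq_count _ _ pred0) // => i; by case: (y i); case: (y' i).
case/tuple_permP => s hs; exists s; apply/ffunP => i.
have := congr1 (fun t => nth false t i) hs.
by rewrite -e -!(tnth_nth false) !tnth_mktuple ffunE.
Qed.
Lemma card_superset (T : finType) (P : {set T}) k :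
  #|[set A : {set T} | (#|A| == k) && (P \subset A)]| =
  if #|P| <= k then 'C(#|T| - #|P|, k - #|P|) else 0.
Proof.
case: leqP => hl; last first.
  apply: eq_card0 => A; rewrite !inE; apply/negbTE; apply/negP => /andP [/eqP hA hPA].
  by have := subset_leq_card hPA; rewrite hA leqNgt hl.
have -> : [set A : {set T} | (#|A| == k) && (P \subset A)] =
  [set B :|: P | B in [set B : {set T} | B \subset ~: P & #|B| == k - #|P|]].
  apply/setP => A; rewrite inE; apply/idP/imsetP.
  - case/andP => /eqP hA hPA; exists (A :\: P).
      rewrite inE (cardsDS hPA) hA eqxx andbT; apply/subsetP => x; rewrite !inE; by case/andP.
    apply/setP => x; rewrite !inE; case hx: (x \in P); rewrite ?orbT ?orbF //.
    by rewrite (subsetP hPA).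
  - case=> B; rewrite inE => /andP [hB /eqP hBc] ->.
    have hI : B :&: P = set0.
      apply/setP => x; rewrite !inE; apply/negP => /andP [xB xP].
      by have := subsetP hB x xB; rewrite inE xP.
    have := cardsUI B P; rewrite hI cards0 addn0 hBc subnK // => ->.
    by rewrite eqxx subsetUr.
rewrite card_in_imset; last first.
  move=> B1 B2; rewrite !inE => /andP [h1 _] /andP [h2 _] e.
  apply/setP => x; have := congr1 (fun A : {set T} => x \in A) e; rewrite !inE /=.
  case hx: (x \in P); last by rewrite !orbF.
  have /negbTE -> : x \notin B1 by apply/negP => /(subsetP h1); rewrite inE hx.
  have /negbTE -> : x \notin B2 by apply/negP => /(subsetP h2); rewrite inE hx.
  by [].
rewrite cards_draws; congr 'C(_, _).
by have := cardsC P; move=> <-; rewrite addKn.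
Qed.

Definition PS m l : {set 'I_m} := [set i : 'I_m | i < l].

Lemma card_PS m l : l <= m -> #|PS m l| = l.
Proof.
move=> hl.
have -> : PS m l = [set widen_ord hl i | i in 'I_l].
  apply/setP => i; rewrite inE; apply/idP/imsetP.
  - by move=> hi; exists (Ordinal hi) => //; apply: val_inj.
  - by case=> j _ ->; rewrite /= ltn_ord.
rewrite card_imset ?card_ord // => i j /(congr1 val) /= e; exact: val_inj.
Qed.

Lemma pre_PS m l (y : {ffun 'I_m -> bool}) : pre l y = (PS m l \subset [set i | y i]).
Proof.
apply/forallP/subsetP => [h i | h i].
- by rewrite !inE => /(implyP (h i)).
- by apply/implyP => hi; have := h i; rewrite !inE; apply.
Qed.

Lemma card_ffun_set m (Q : {set 'I_m} -> bool) :
  #|[set y : {ffun 'I_m -> bool} | Q [set i | y i]]| = #|[set A : {set 'I_m} | Q A]|.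
Proof.
have inj : injective (fun y : {ffun 'I_m -> bool} => [set i | y i]).
  move=> y y' e; apply/ffunP => i.
  by have := congr1 (fun A : {set 'I_m} => i \in A) e; rewrite !inE.
rewrite -(card_imset _ inj); apply: eq_card => A; apply/imsetP/idP.
- by case=> y; rewrite !inE => hy ->.
- rewrite inE => hA; exists [ffun i => i \in A].
    by rewrite inE; congr Q: hA; apply/setP => i; rewrite !inE ffunE.
  by apply/setP => i; rewrite !inE ffunE.
Qed.

Lemma card_cls m k l : l <= m ->
  #|[set y : {ffun 'I_m -> bool} | (cnt y == k) && pre l y]| =
  if l <= k then 'C(m - l, k - l) else 0.
Proof.
move=> hl.
transitivity #|[set A : {set 'I_m} | (#|A| == k) && (PS m l \subset A)]|;
  last by rewrite card_superset card_PS // card_ord.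
rewrite -(card_ffun_set (fun A => (#|A| == k) && (PS m l \subset A))).
by apply: eq_card => y; rewrite !inE pre_PS.
Qed.

Lemma ffact_split m l k : l <= k -> k <= m -> m ^_ l * (m - l) ^_ (k - l) = m ^_ k.
Proof.
move=> hlk hkm.
have hl : l <= m by apply: leq_trans hkm.
apply/eqP; rewrite -(eqn_pmul2r (fact_gt0 (m - k))) -mulnA.
have -> : m - k = (m - l) - (k - l) by rewrite subnBA // subnK.
rewrite ffact_fact ?leq_sub2r // ffact_fact //.
by rewrite subnBA // subnK // ffact_fact.
Qed.

Lemma hyp_nat m k l : k <= m ->
  (if l <= k then 'C(m - l, k - l) else 0) * m ^_ l = 'C(m, k) * k ^_ l.
Proof.
move=> hkm; case: leqP => hlk; last by rewrite mul0n ffact_small // muln0.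
apply/eqP; rewrite -(eqn_pmul2r (fact_gt0 (k - l))).
by rewrite mulnAC bin_ffact [X in X == _]mulnC ffact_split // -mulnA ffact_fact // bin_ffact.
Qed.

Import GRing.Theory Num.Theory.
Local Open Scope ring_scope.

Lemma hyp_ratio (R : realFieldType) m k l : (k <= m)%N -> (l <= m)%N ->
  ((if (l <= k)%N then 'C(m - l, k - l) else 0)%:R / 'C(m, k)%:R : R) =
  (k ^_ l)%:R / (m ^_ l)%:R.
Proof.
move=> hkm hlm; apply/eqP; rewrite eqr_div ?pnatr_eq0 -?lt0n ?bin_gt0 ?ffact_gt0 //.
by rewrite -!natrM hyp_nat // mulnC.
Qed.

Definition cls r1 r2 (k1 k2 : nat) (y : outcome r1 r2) := (cnt y.1 == k1) && (cnt y.2 == k2).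
Definition preb r1 r2 l1 l2 (y : outcome r1 r2) := pre l1 y.1 && pre l2 y.2.
Definition ccst (R : realFieldType) r1 r2 (q : outcome r1 r2 -> R) :=
  forall y y', cnt y.1 = cnt y'.1 -> cnt y.2 = cnt y'.2 -> q y = q y'.
Definition Nh m k l := if (l <= k)%N then 'C(m - l, k - l) else 0%N.

Lemma cnt_le m (y : {ffun 'I_m -> bool}) : (cnt y <= m)%N.
Proof. by rewrite /cnt -[X in (_ <= X)%N](card_ord m) max_card. Qed.

Lemma part (R : realFieldType) r1 r2 (F : outcome r1 r2 -> R) :
  \sum_y F y = \sum_(k1 < r1.+1) \sum_(k2 < r2.+1) \sum_(y | cls k1 k2 y) F y.
Proof.
rewrite pair_big /= (partition_big (fun y : outcome r1 r2 =>
   (inord (cnt y.1) : 'I_r1.+1, inord (cnt y.2) : 'I_r2.+1)) xpredT) //.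
apply: eq_bigr => [[k1 k2]] _; apply: eq_bigl => y /=.
by rewrite /cls xpair_eqE -!(inj_eq val_inj) /= !inordK // ltnS cnt_le.
Qed.

Lemma pre0 m (y : {ffun 'I_m -> bool}) : pre 0 y.
Proof. by apply/forallP. Qed.

Lemma card_clsP r1 r2 k1 k2 l1 l2 : (l1 <= r1)%N -> (l2 <= r2)%N ->
  #|[pred y : outcome r1 r2 | cls k1 k2 y && preb l1 l2 y]| = (Nh r1 k1 l1 * Nh r2 k2 l2)%N.
Proof.
move=> h1 h2.
transitivity #|setX [set y : {ffun 'I_r1 -> bool} | (cnt y == k1) && pre l1 y]
                    [set y : {ffun 'I_r2 -> bool} | (cnt y == k2) && pre l2 y]|.
  by apply: eq_card => y; rewrite !inE /cls /preb andbACA.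
by rewrite cardsX !card_cls.
Qed.

Lemma Nh0 m k : Nh m k 0%N = 'C(m, k).
Proof. by rewrite /Nh leq0n !subn0. Qed.

Set Implicit Arguments. Unset Strict Implicit. Unset Printing Implicit Defensive.
Import GRing.Theory Num.Theory.
Local Open Scope ring_scope.

Lemma card_cls0 r1 r2 k1 k2 : #|@cls r1 r2 k1 k2| = ('C(r1, k1) * 'C(r2, k2))%N.
Proof.
have h := @card_clsP r1 r2 k1 k2 0%N 0%N (leq0n _) (leq0n _).
rewrite !Nh0 in h.
rewrite -{}h; apply: eq_card => y.
by rewrite [in RHS]inE /preb !pre0 andbT andbT.
Qed.

Lemma sum_cls (R : realFieldType) r1 r2 (q : outcome r1 r2 -> R) : ccst q ->
  forall k1 k2 l1 l2, (l1 <= r1)%N -> (l2 <= r2)%N ->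
  \sum_(y | cls k1 k2 y && preb l1 l2 y) q y =
  (Nh r1 k1 l1 * Nh r2 k2 l2)%:R / ('C(r1, k1) * 'C(r2, k2))%:R * \sum_(y | cls k1 k2 y) q y.
Proof.
move=> hq k1 k2 l1 l2 h1 h2.
case: (pickP (fun y : outcome r1 r2 => cls k1 k2 y)) => [y0 hy0 | h0]; last first.
  by rewrite !big_pred0 ?mulr0 // => y; rewrite h0.
have e : forall P : pred (outcome r1 r2), (forall y, P y -> cls k1 k2 y) ->
    forall N, #|P| = N -> \sum_(y | P y) q y = q y0 *+ N.
  move=> P hP N <-; rewrite -sumr_const; apply: eq_bigr => y /hP.
  by move: hy0; rewrite /cls => /andP [/eqP e1 /eqP e2] /andP [/eqP e3 /eqP e4]; apply: hq; rewrite ?e1 ?e3 ?e2 ?e4.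
rewrite (e _ _ (Nh r1 k1 l1 * Nh r2 k2 l2)%N); first last.
- apply: etrans (@card_clsP r1 r2 k1 k2 l1 l2 h1 h2).
  by apply: (@eq_card _ (fun y : outcome r1 r2 => cls k1 k2 y && preb l1 l2 y)
     [pred y : outcome r1 r2 | cls k1 k2 y && preb l1 l2 y]) => y.
- by move=> y /andP [].
rewrite (e _ _ ('C(r1, k1) * 'C(r2, k2))%N); first last.
- exact: card_cls0.
- by [].
rewrite -[q y0 *+ (Nh _ _ _ * _)%N]mulr_natr -[q y0 *+ ('C(_, _) * _)%N]mulr_natr.
have hC : ('C(r1, k1) * 'C(r2, k2))%:R != 0 :> R.
  move: hy0; rewrite /cls => /andP [/eqP e1 /eqP e2].
  by rewrite pnatr_eq0 -lt0n muln_gt0 !bin_gt0 -e1 -e2 !cnt_le.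
by rewrite [RHS]mulrCA divfK.
Qed.


Lemma hyp_sum (R : realFieldType) r1 r2 (q : outcome r1 r2 -> R) : ccst q ->
  forall l1 l2, (l1 <= r1)%N -> (l2 <= r2)%N ->
  \sum_(y | preb l1 l2 y) q y = \sum_(k1 < r1.+1) \sum_(k2 < r2.+1)
     (\sum_(y | cls k1 k2 y) q y) * lambda_coord R r1 r2 k1 k2 l1 l2.
Proof.
move=> hq l1 l2 h1 h2.
rewrite big_mkcond part; apply: eq_bigr => k1 _; apply: eq_bigr => k2 _.
rewrite -big_mkcondr sum_cls // mulrC; congr (_ * _).
by rewrite /lambda_coord !natrM -mulf_div /Nh !hyp_ratio ?mulf_div // -ltnS ltn_ord.
Qed.
Set Implicit Arguments. Unset Strict Implicit. Unset Printing Implicit Defensive.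
Import GRing.Theory Num.Theory.
Local Open Scope ring_scope.

Definition res n1 n2 r1 r2 (h1 : (n1 <= r1)%N) (h2 : (n2 <= r2)%N) (y : outcome r1 r2)
  : outcome n1 n2 := ([ffun i => y.1 (widen_ord h1 i)], [ffun j => y.2 (widen_ord h2 j)]).

Lemma restricts_res n1 n2 r1 r2 (h1 : (n1 <= r1)%N) (h2 : (n2 <= r2)%N)
  (y : outcome r1 r2) (x : outcome n1 n2) : restricts y x = (x == res h1 h2 y).
Proof.
rewrite /restricts; apply/andP/eqP => [[/forallP a /forallP b] | ->].
- case: x a b => x1 x2 /= a b; congr pair; apply/ffunP => i; rewrite ffunE.
  + by have /implyP/(_ (eqxx _))/eqP := forallP (a i) (widen_ord h1 i).
  + by have /implyP/(_ (eqxx _))/eqP := forallP (b i) (widen_ord h2 i).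
- split; apply/forallP => i; apply/forallP => j; apply/implyP => /eqP e; rewrite /= ffunE.
  + by have -> : j = widen_ord h1 i by apply: val_inj.
  + by have -> : j = widen_ord h2 i by apply: val_inj.
Qed.

Lemma pre_res m r (h : (m <= r)%N) l (hl : (l <= m)%N) (y : {ffun 'I_r -> bool}) :
  pre l [ffun i => y (widen_ord h i)] = pre l y.
Proof.
apply/forallP/forallP => H i.
- apply/implyP => hi.
  have him : (i < m)%N by apply: leq_trans hl.
  have := implyP (H (Ordinal him)) hi; rewrite ffunE.
  by have -> : widen_ord h (Ordinal him) = i by apply: val_inj.
- apply/implyP => hi; rewrite ffunE; exact: (implyP (H (widen_ord h i)) hi).
Qed.

Lemma wcoord_res (R : realFieldType) n1 n2 r1 r2 (h1 : (n1 <= r1)%N) (h2 : (n2 <= r2)%N)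
  (q : outcome r1 r2 -> R) l1 l2 : (l1 <= n1)%N -> (l2 <= n2)%N ->
  wcoord (fun x : outcome n1 n2 => \sum_(y | restricts y x) q y) l1 l2 =
  \sum_(y | preb l1 l2 y) q y.
Proof.
move=> hl1 hl2; rewrite /wcoord.
rewrite (eq_bigr (fun x => \sum_(y | x == res h1 h2 y) q y)); last first.
  by move=> x _; apply: eq_bigl => y; rewrite restricts_res.
rewrite (exchange_big_dep xpredT) //= [RHS]big_mkcond; apply: eq_bigr => y _.
rewrite (eq_bigl (fun x => (x == res h1 h2 y) && preb l1 l2 y)); last first.
  move=> x; case: eqP => [->|_]; last by rewrite andbF.
  by rewrite andbT /preb -(pre_res h1 hl1) -(pre_res h2 hl2).
by rewrite big_mkcondr big_pred1_eq.
Qed.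

Lemma dfpe_ccst (R : realFieldType) n1 n2 (p : outcome n1 n2 -> R) : DFPE p -> ccst p.
Proof.
move=> hp y y' e1 e2.
case: (cnt_perm e1) => s1 E1; case: (cnt_perm e2) => s2 E2.
have -> : y' = permute_outcome s1 s2 y by move: E1 E2; case: y' {e1 e2} => a b /= -> ->.
by rewrite hp.
Qed.

Definition extf n r (h : (n <= r)%N) (s : 'S_n) (i : 'I_r) : 'I_r :=
  if (insub (val i) : option 'I_n) is Some j then widen_ord h (s j) else i.

Lemma extf_inj n r (h : (n <= r)%N) (s : 'S_n) : injective (extf h s).
Proof.
move=> i j; rewrite /extf.
case: insubP => [i' hi ei | hi]; case: insubP => [j' hj ej | hj] //.
- move/(congr1 val) => /= /val_inj/perm_inj ij.
  by apply: val_inj; rewrite -ei -ej ij.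
- by move=> e; rewrite -e /= ltn_ord in hj.
- by move=> e; rewrite e /= ltn_ord in hi.
Qed.

Definition ext n r (h : (n <= r)%N) (s : 'S_n) : 'S_r := perm (@extf_inj n r h s).

Lemma ext_widen n r (h : (n <= r)%N) (s : 'S_n) i :
  ext h s (widen_ord h i) = widen_ord h (s i).
Proof.
rewrite permE /extf; case: insubP => [j _ ej | ]; last by rewrite /= ltn_ord.
by congr (widen_ord _ (s _)); apply: val_inj.
Qed.

Lemma res_perm n1 n2 r1 r2 (h1 : (n1 <= r1)%N) (h2 : (n2 <= r2)%N) s1 s2 (y : outcome r1 r2) :
  res h1 h2 (permute_outcome (ext h1 s1) (ext h2 s2) y) = permute_outcome s1 s2 (res h1 h2 y).
Proof. by rewrite /res /permute_outcome /=; congr pair; apply/ffunP => i; rewrite !ffunE ext_widen. Qed.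

Lemma permute_inj n1 n2 (s1 : 'S_n1) (s2 : 'S_n2) : injective (permute_outcome s1 s2).
Proof.
move=> [a b] [c d] /= [e1 e2]; congr pair; apply/ffunP => i.
  by have := congr1 (fun f : {ffun 'I_n1 -> bool} => f (s1^-1 i)%g) e1; rewrite /= !ffunE permKV.
by have := congr1 (fun f : {ffun 'I_n2 -> bool} => f (s2^-1 i)%g) e2; rewrite /= !ffunE permKV.
Qed.

Lemma res_dfpe (R : realFieldType) n1 n2 r1 r2 (h1 : (n1 <= r1)%N) (h2 : (n2 <= r2)%N)
  (q : outcome r1 r2 -> R) : DFPE q ->
  DFPE (fun x : outcome n1 n2 => \sum_(y | restricts y x) q y).
Proof.
move=> hq s1 s2 x /=.
rewrite (eq_bigl (fun y => permute_outcome s1 s2 x == res h1 h2 y)); last first.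
  by move=> y; rewrite restricts_res.
rewrite [RHS](eq_bigl (fun y => x == res h1 h2 y)); last first.
  by move=> y; rewrite restricts_res.
rewrite (reindex_inj (@permute_inj r1 r2 (ext h1 s1) (ext h2 s2))) /=.
apply: eq_big => y; first by rewrite res_perm (inj_eq (@permute_inj _ _ s1 s2)).
by move=> _; rewrite hq.
Qed.
Set Implicit Arguments. Unset Strict Implicit. Unset Printing Implicit Defensive.
Import GRing.Theory Num.Theory.
Local Open Scope ring_scope.

From Stdlib Require Import Lia.

Lemma arith n1 n2 k1 k2 j1 j2 d : (k1 <= j1)%N -> (k2 <= j2)%N -> (j1 <= n1)%N ->
  (j2 <= n2)%N -> (j1 != k1) || (j2 != k2) -> ((n1 - k1) + (n2 - k2) < d.+1)%N ->
  ((n1 - j1) + (n2 - j2) < d)%N.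
Proof.
move=> /ssrnat.leP h1 /ssrnat.leP h2 /ssrnat.leP h3 /ssrnat.leP h4 h /ssrnat.leP h5; apply/ssrnat.leP.
move: h5; rewrite -!plusE -!minusE => h5.
case/orP: h => /eqP h; lia.
Qed.

Lemma lam_small (R : realFieldType) n1 n2 j1 j2 k1 k2 :
  (j1 < k1)%N || (j2 < k2)%N -> lambda_coord R n1 n2 j1 j2 k1 k2 = 0.
Proof.
by case/orP => h; rewrite /lambda_coord (ffact_small h) ?mul0r ?mulr0 ?mul0r.
Qed.

Lemma lam_diag (R : realFieldType) n1 n2 k1 k2 : (k1 <= n1)%N -> (k2 <= n2)%N ->
  lambda_coord R n1 n2 k1 k2 k1 k2 != 0.
Proof.
move=> h1 h2; rewrite /lambda_coord -!natrM mulf_neq0 ?invr_eq0 ?pnatr_eq0 -?lt0n ?muln_gt0 ?ffact_gt0 ?leqnn ?h1 ?h2 //.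
Qed.

Lemma sum_const_on (R : realFieldType) (T : finType) (P : pred T) (F : T -> R) c :
  (forall y, P y -> F y = c) -> \sum_(y | P y) F y = c *+ #|P|.
Proof. by move=> h; rewrite -sumr_const; apply: eq_bigr => y /h. Qed.

Lemma sum_cls_const (R : realFieldType) n1 n2 (p : outcome n1 n2 -> R) : ccst p ->
  forall x : outcome n1 n2,
  \sum_(y | cls (cnt x.1) (cnt x.2) y) p y = p x *+ ('C(n1, cnt x.1) * 'C(n2, cnt x.2)).
Proof.
move=> hp x.
rewrite (@sum_const_on R _ (@cls n1 n2 (cnt x.1) (cnt x.2)) p (p x)).
  by congr (_ *+ _); exact: card_cls0.
by move=> y; rewrite /cls => /andP [/eqP e1 /eqP e2]; apply: hp.
Qed.

Lemma determ (R : realFieldType) n1 n2 (p p' : outcome n1 n2 -> R) : ccst p -> ccst p' ->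
  (forall l1 l2, (l1 <= n1)%N -> (l2 <= n2)%N ->
     \sum_(y | preb l1 l2 y) p y = \sum_(y | preb l1 l2 y) p' y) -> p =1 p'.
Proof.
move=> hp hp' hw.
pose a k1 k2 := \sum_(y | @cls n1 n2 k1 k2 y) p y.
pose a' k1 k2 := \sum_(y | @cls n1 n2 k1 k2 y) p' y.
have key : forall d k1 k2, (k1 <= n1)%N -> (k2 <= n2)%N ->
    ((n1 - k1) + (n2 - k2) < d)%N -> a k1 k2 = a' k1 k2.
  elim=> [//|d IH] k1 k2 hk1 hk2 hd.
  have E := hw k1 k2 hk1 hk2.
  rewrite (hyp_sum hp) // (hyp_sum hp') // in E.
  have E2 : \sum_(j1 < n1.+1) \sum_(j2 < n2.+1)
      (a j1 j2 - a' j1 j2) * lambda_coord R n1 n2 j1 j2 k1 k2 = 0.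
    rewrite (eq_bigr (fun j1 : 'I_n1.+1 =>
       \sum_(j2 < n2.+1) a j1 j2 * lambda_coord R n1 n2 j1 j2 k1 k2 -
       \sum_(j2 < n2.+1) a' j1 j2 * lambda_coord R n1 n2 j1 j2 k1 k2)).
      by rewrite sumrB E subrr.
    by move=> j1 _; rewrite -sumrB; apply: eq_bigr => j2 _; rewrite mulrBl.
  rewrite pair_big /= (bigD1 ((inord k1, inord k2) : 'I_n1.+1 * 'I_n2.+1)) //= in E2.
  rewrite big1 ?addr0 in E2; last first.
    move=> [j1 j2] /= hj.
    case: (boolP ((j1 < k1)%N || (j2 < k2)%N)) => hs; first by rewrite lam_small // mulr0.
    rewrite negb_or -!leqNgt in hs; case/andP: hs => hs1 hs2.
    have hj1 : (j1 <= n1)%N by rewrite -ltnS ltn_ord.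
    have hj2 : (j2 <= n2)%N by rewrite -ltnS ltn_ord.
    have hne : (j1 != k1 :> nat) || (j2 != k2 :> nat).
      move: hj; rewrite xpair_eqE negb_and -!(inj_eq val_inj) /= !inordK // ltnS.
    have hij := arith hs1 hs2 hj1 hj2 hne hd.
    have -> : a j1 j2 = a' j1 j2 := IH j1 j2 hj1 hj2 hij.
    by rewrite subrr mul0r.
  rewrite !inordK ?ltnS // in E2.
  move/eqP: E2; rewrite mulf_eq0 (negbTE (lam_diag R hk1 hk2)) orbF subr_eq0.
  by move/eqP.
move=> x.
have hx1 := cnt_le x.1; have hx2 := cnt_le x.2.
have E : \sum_(y | cls (cnt x.1) (cnt x.2) y) p y = \sum_(y | cls (cnt x.1) (cnt x.2) y) p' y
  := key _ _ _ hx1 hx2 (ltnSn _).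
rewrite (sum_cls_const hp) (sum_cls_const hp') in E.
apply: (pmulrnI _ E); by rewrite muln_gt0 !bin_gt0 hx1 hx2.
Qed.
Set Implicit Arguments. Unset Strict Implicit. Unset Printing Implicit Defensive.
Import GRing.Theory Num.Theory.
Local Open Scope ring_scope.

Import Order.TTheory.

Theorem mainTheorem4 (R : realFieldType) (n1 n2 r1 r2 : nat)
  (p : outcome n1 n2 -> R) :
  (n1 <= r1)%N -> (n2 <= r2)%N -> is_law p -> DFPE p ->
  (extendible r1 r2 p <-> in_conv_lambda n1 n2 r1 r2 (wcoord p)).
Proof.
move=> h1 h2 [p0 p1] hpD; split.
- case=> q [[q0 q1] qD hq].
  have hqc := dfpe_ccst qD.
  exists (fun k1 k2 => \sum_(y | @cls r1 r2 k1 k2 y) q y); split.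
  + by move=> k1 k2; apply: sumr_ge0 => y _; apply: q0.
  + by rewrite -(part q) q1.
  + move=> l1 l2 hl1 hl2 _.
    have -> : wcoord p l1 l2 = wcoord (fun x : outcome n1 n2 => \sum_(y | restricts y x) q y) l1 l2.
      by apply: eq_bigr => x _; apply: hq.
    rewrite (wcoord_res h1 h2) // (hyp_sum hqc) //.
      exact: leq_trans hl1 h1.
    exact: leq_trans hl2 h2.
- case=> c [c0 c1 cw].
  pose q (y : outcome r1 r2) := c (inord (cnt y.1)) (inord (cnt y.2)) /
     ('C(r1, cnt y.1) * 'C(r2, cnt y.2))%:R.
  have hqc : ccst q by move=> y y' e1 e2; rewrite /q e1 e2.
  have qcls : forall (k1 : 'I_r1.+1) (k2 : 'I_r2.+1), \sum_(y | cls k1 k2 y) q y = c k1 k2.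
    move=> k1 k2.
    rewrite (@sum_const_on R _ (@cls r1 r2 k1 k2) q (c k1 k2 / ('C(r1, k1) * 'C(r2, k2))%:R)); last first.
      by move=> y /andP [/eqP e1 /eqP e2]; rewrite /q e1 e2 !inord_val.
    rewrite (card_cls0 r1 r2 k1 k2) -[X in X = _]mulr_natr divfK; first by [].
    by rewrite pnatr_eq0 -lt0n muln_gt0 !bin_gt0 -ltnS ltn_ord -ltnS ltn_ord.
  have qD : DFPE q.
    move=> s1 s2 y; rewrite /q /permute_outcome /=.
    have := cnt_pf s1 y.1; rewrite /pf => ->.
    by have := cnt_pf s2 y.2; rewrite /pf => ->.
  exists q; split.
  + split; first by move=> y; rewrite /q divr_ge0 // ler0n.
    rewrite part -c1; apply: eq_bigr => k1 _; apply: eq_bigr => k2 _; exact: qcls.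
  + exact: qD.
  + move=> x.
    pose p' := fun x : outcome n1 n2 => \sum_(y | restricts y x) q y.
    suff : p =1 p' by move=> /(_ x).
    apply: (determ (dfpe_ccst hpD) (dfpe_ccst (res_dfpe h1 h2 qD))).
    move=> l1 l2 hl1 hl2.
    change (wcoord p l1 l2 = wcoord p' l1 l2).
    rewrite (wcoord_res h1 h2) // (hyp_sum hqc); first last.
    - exact: leq_trans hl2 h2.
    - exact: leq_trans hl1 h1.
    rewrite (eq_bigr (fun k1 : 'I_r1.+1 => \sum_(k2 < r2.+1) c k1 k2 * lambda_coord R r1 r2 k1 k2 l1 l2)); last first.
      by move=> k1 _; apply: eq_bigr => k2 _; rewrite qcls.
    case: (eqVneq (l1, l2) (0%N, 0%N)) => [e | ne]; last by apply: cw => // e; rewrite e eqxx in ne.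
    case: e => -> ->.
    have l00 : forall k1 k2 : nat, lambda_coord R r1 r2 k1 k2 0 0 = 1.
      by move=> k1 k2; rewrite /lambda_coord !ffactn0 mulr1 invr1 mulr1.
    rewrite (eq_bigr (fun k1 : 'I_r1.+1 => \sum_(k2 < r2.+1) c k1 k2)); last first.
      by move=> k1 _; apply: eq_bigr => k2 _; rewrite l00 mulr1.
    rewrite c1 -p1; apply: eq_bigl => y.
    by apply/andP; split; apply/forallP => i.
Qed.
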